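(* Let $\beta>0$, set $\alpha=1/\beta$, and let $m,n\ge 1$ be integers and $\mathbf{M}$ a real $m\times n$ matrix. Let $\mathbf{x}^{n,\beta}\in\mathbb{H}^{n,\beta}$ and let $\mathbf{x}^{n,\alpha}=p_{\mathbb{H}^{n,\beta}\to\mathbb{D}^{n,\alpha}}(\mathbf{x}^{n,\beta})\in\mathbb{D}^{n,\alpha}$ be the same point of hyperbolic space represented in the Poincar\'e ball model. Then the Lorentzian matrix-vector multiplication and the M\''obius matrix-vector multiplication are equivalent, i.e. $$p_{\mathbb{H}^{m,\beta}\to\mathbb{D}^{m,\alpha}}\big(\mathbf{M}\otimes^{\beta}\mathbf{x}^{n,\beta}\big)=\mathbf{M}\otimes^{\alpha}\mathbf{x}^{n,\alpha}.$$
   Context: Lorentzian scalar product on $\mathbb{R}^{n+1}$: $\langle \mathbf{x},\mathbf{y}\rangle_{\mathcal{L}}=-x_0y_0+\sum_{i=1}^n x_iy_i$, and $\|\mathbf{v}\|_{\mathcal{L}}=\sqrt{\langle\mathbf{v},\mathbf{v}\rangle_{\mathcal{L}}}$. Hyperboloid model: $\mathbb{H}^{n,\beta}=\{\mathbf{x}\in\mathbb{R}^{n+1}:\langle\mathbf{x},\mathbf{x}\rangle_{\mathcal{L}}=-\beta,\ x_0>0\}$, with origin $\mathbf{0}=(\sqrt{\beta},0,\dots,0)$ and tangent space $\mathcal{T}_{\mathbf{0}}\mathbb{H}^{n,\beta}=\{\mathbf{v}:\langle\mathbf{v},\mathbf{0}\rangle_{\mathcal{L}}=0\}=\{\mathbf{v}:v_0=0\}$.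 Intrinsic distance $d^\beta_{\mathbb{H}}(\mathbf{x},\mathbf{y})=\sqrt{\beta}\,\mathrm{arcosh}(-\langle\mathbf{x},\mathbf{y}\rangle_{\mathcal{L}}/\beta)$. Exponential map at the origin: for $\mathbf{v}\in\mathcal{T}_{\mathbf{0}}\mathbb{H}^{n,\beta}$, $\mathbf{v}\neq 0$, $\exp^\beta_{\mathbf{0}}(\mathbf{v})=\cosh(\|\mathbf{v}\|_{\mathcal{L}}/\sqrt{\beta})\mathbf{0}+\sqrt{\beta}\sinh(\|\mathbf{v}\|_{\mathcal{L}}/\sqrt{\beta})\,\mathbf{v}/\|\mathbf{v}\|_{\mathcal{L}}$, and $\exp^\beta_{\mathbf{0}}(0)=\mathbf{0}$. Logarithmic map at the origin: for $\mathbf{y}\in\mathbb{H}^{n,\beta}$, $\mathbf{y}\ne\mathbf{0}$, $\log^\beta_{\mathbf{0}}(\mathbf{y})=d^\beta_{\mathbb{H}}(\mathbf{0},\mathbf{y})\,\frac{\mathbf{y}+\frac1\beta\langle\mathbf{0},\mathbf{y}\rangle_{\mathcal{L}}\mathbf{0}}{\|\mathbf{y}+\frac1\beta\langle\mathbf{0},\mathbf{y}\rangle_{\mathcal{L}}\mathbf{0}\|_{\mathcal{L}}}$, and $\log^\beta_{\mathbf{0}}(\mathbf{0})=0$. Lorentzian matrix-vector multiplication: for $\mathbf{x}\in\mathbb{H}^{n,\beta}$, writing $\log^\beta_{\mathbf{0}}(\mathbf{x})=(v_0,v_1,\dots,v_n)$, set $\hat{\mathbf{M}}(\mathbf{v})=(0,\mathbf{M}(v_1,\dots,v_n)^T)\in\mathbb{R}^{m+1}$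 and $\mathbf{M}\otimes^\beta\mathbf{x}=\exp^\beta_{\mathbf{0}}(\hat{\mathbf{M}}(\log^\beta_{\mathbf{0}}(\mathbf{x})))\in\mathbb{H}^{m,\beta}$ (exponential map of $\mathbb{H}^{m,\beta}$). Poincar\'e ball model: $\mathbb{D}^{n,\alpha}=\{\mathbf{x}\in\mathbb{R}^n:\alpha\|\mathbf{x}\|^2<1\}$ (Euclidean norm). M\''obius matrix-vector multiplication: $\mathbf{M}\otimes^\alpha\mathbf{x}=\frac{1}{\sqrt{\alpha}}\tanh\!\Big(\frac{\|\mathbf{M}\mathbf{x}\|}{\|\mathbf{x}\|}\tanh^{-1}(\sqrt{\alpha}\|\mathbf{x}\|)\Big)\frac{\mathbf{M}\mathbf{x}}{\|\mathbf{M}\mathbf{x}\|}$ for $\mathbf{M}\mathbf{x}\neq 0$, and $=0$ if $\mathbf{M}\mathbf{x}=0$. Isometry between models: $p_{\mathbb{H}^{n,\beta}\to\mathbb{D}^{n,\alpha}}(x_0,x_1,\dots,x_n)=\frac{\sqrt{\beta}(x_1,\dots,x_n)}{\sqrt{\beta}+x_0}$. *)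

(* Defs.v *)
From HB Require Import structures.
From mathcomp Require Import all_boot all_order all_algebra.
From mathcomp Require Import all_classical all_reals.
From mathcomp Require Import sequences exp.
Set Implicit Arguments. Unset Strict Implicit. Unset Printing Implicit Defensive.
Import Order.TTheory GRing.Theory Num.Theory.
Local Open Scope ring_scope.

Section Hyperbolic.
Variable R : realType.

Definition cosh (t : R) : R := (expR t + expR (- t)) / 2.
Definition sinh (t : R) : R := (expR t - expR (- t)) / 2.
Definition tanh (t : R) : R := sinh t / cosh t.
Definition arcosh (t : R) : R := ln (t + Num.sqrt (t ^+ 2 - 1)).
Definition artanh (t : R) : R := ln ((1 + t) / (1 - t)) / 2.

(* Vectors of R^{n+1} are columns 'cV_(1+n): coordinate x_0 is the top
   entry, (x_1,...,x_n) is the bottom block. *)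
Definition hd {n} (x : 'cV[R]_(1 + n)) : R := usubmx x 0 0.
Definition tl {n} (x : 'cV[R]_(1 + n)) : 'cV[R]_n := dsubmx x.

Definition lprod {n} (x y : 'cV[R]_(1 + n)) : R :=
  - (hd x * hd y) + \sum_(i < n) tl x i 0 * tl y i 0.
Definition lnorm {n} (v : 'cV[R]_(1 + n)) : R := Num.sqrt (lprod v v).

Definition hyperboloid (n : nat) (beta : R) (x : 'cV[R]_(1 + n)) : Prop :=
  lprod x x = - beta /\ 0 < hd x.

Definition horigin (n : nat) (beta : R) : 'cV[R]_(1 + n) :=
  col_mx (Num.sqrt beta)%:M 0.

Definition hdist {n} (beta : R) (x y : 'cV[R]_(1 + n)) : R :=
  Num.sqrt beta * arcosh (- lprod x y / beta).

Definition expo {n} (beta : R) (v : 'cV[R]_(1 + n)) : 'cV[R]_(1 + n) :=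
  if v == 0 then horigin n beta
  else cosh (lnorm v / Num.sqrt beta) *: horigin n beta
       + (Num.sqrt beta * sinh (lnorm v / Num.sqrt beta) / lnorm v) *: v.

Definition logo {n} (beta : R) (y : 'cV[R]_(1 + n)) : 'cV[R]_(1 + n) :=
  if y == horigin n beta then 0
  else let w := y + (lprod (horigin n beta) y / beta) *: horigin n beta in
       (hdist beta (horigin n beta) y / lnorm w) *: w.

Definition Mhat {m n} (M : 'M[R]_(m, n)) (v : 'cV[R]_(1 + n)) : 'cV[R]_(1 + m) :=
  col_mx 0 (M *m tl v).
Definition lorentz_mul {m n} (beta : R) (M : 'M[R]_(m, n))
  (x : 'cV[R]_(1 + n)) : 'cV[R]_(1 + m) :=
  expo beta (Mhat M (logo beta x)).

Definition enorm {n} (x : 'cV[R]_n) : R :=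
  Num.sqrt (\sum_(i < n) x i 0 ^+ 2).

Definition pball (n : nat) (alpha : R) (x : 'cV[R]_n) : Prop :=
  alpha * enorm x ^+ 2 < 1.

Definition mobius_mul {m n} (alpha : R) (M : 'M[R]_(m, n)) (x : 'cV[R]_n)
  : 'cV[R]_m :=
  if M *m x == 0 then 0
  else (tanh (enorm (M *m x) / enorm x * artanh (Num.sqrt alpha * enorm x))
        / Num.sqrt alpha / enorm (M *m x)) *: (M *m x).

Definition p_HD {n} (beta : R) (x : 'cV[R]_(1 + n)) : 'cV[R]_n :=
  (Num.sqrt beta / (Num.sqrt beta + hd x)) *: tl x.

End Hyperbolic.

(* Main.v *)
Require Import Defs.
From mathcomp Require Import all_boot all_order all_algebra.
From mathcomp Require Import all_classical all_reals.
From mathcomp Require Import sequences exp.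
From mathcomp Require Import ring lra.
Import Order.TTheory GRing.Theory Num.Theory.
Local Open Scope ring_scope.
Set Implicit Arguments. Unset Strict Implicit.

Section Helpers.
Variable R : realType.

Definition sq {n} (u : 'cV[R]_n) : R := \sum_(i < n) u i 0 ^+ 2.

Lemma sq_ge0 n (u : 'cV[R]_n) : 0 <= sq u.
Proof. by apply: sumr_ge0 => i _; rewrite sqr_ge0. Qed.

Lemma sq_eq0 n (u : 'cV[R]_n) : sq u = 0 -> u = 0.
Proof.
move=> h; apply/matrixP => i j; rewrite (ord1 j) mxE.
have := (@psumr_eq0P _ _ xpredT (fun i => u i 0 ^+ 2) (fun i _ => sqr_ge0 (u i 0)) h i isT).
by move/eqP; rewrite sqrf_eq0 => /eqP.
Qed.

Lemma sqZ n (c : R) (u : 'cV[R]_n) : sq (c *: u) = c ^+ 2 * sq u.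
Proof. rewrite /sq mulr_sumr; apply: eq_bigr => i _; rewrite mxE; ring. Qed.

Lemma enormE n (u : 'cV[R]_n) : enorm u = Num.sqrt (sq u).
Proof. by []. Qed.

Lemma enorm_gt0 n (u : 'cV[R]_n) : u != 0 -> 0 < enorm u.
Proof.
move=> hu; rewrite enormE sqrtr_gt0 lt_neqAle sq_ge0 andbT eq_sym.
by apply/eqP => /sq_eq0 h; rewrite h eqxx in hu.
Qed.

Lemma enormZ n (c : R) (u : 'cV[R]_n) : 0 <= c -> enorm (c *: u) = c * enorm u.
Proof.
move=> hc; rewrite !enormE sqZ sqrtrM ?sqr_ge0 // sqrtr_sqr ger0_norm //.
Qed.

Lemma hd_col n (A : 'cV[R]_1) (w : 'cV[R]_n) : hd (col_mx A w) = A 0 0.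
Proof. by rewrite /hd col_mxKu. Qed.

Lemma tl_col n (A : 'cV[R]_1) (w : 'cV[R]_n) : tl (col_mx A w) = w.
Proof. by rewrite /tl col_mxKd. Qed.

Lemma lprod_col n (A C : 'cV[R]_1) (u v : 'cV[R]_n) :
  lprod (col_mx A u) (col_mx C v) = - (A 0 0 * C 0 0) + \sum_(i < n) u i 0 * v i 0.
Proof. by rewrite /lprod !hd_col !tl_col. Qed.

Lemma sqE n (u : 'cV[R]_n) : \sum_(i < n) u i 0 * u i 0 = sq u.
Proof. by apply: eq_bigr => i _; rewrite expr2. Qed.

Lemma colE n (x : 'cV[R]_(1 + n)) : x = col_mx (hd x)%:M (tl x).
Proof. by rewrite /hd /tl -mx11_scalar vsubmxK. Qed.

Lemma tanh_half (s : R) :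
  sinh s / (1 + cosh s) = tanh (s / 2).
Proof.
rewrite /sinh /cosh /tanh /sinh /cosh.
set q := expR (s / 2).
have q0 : 0 < q by apply: expR_gt0.
have e1 : expR s = q * q by rewrite -expRD -splitr.
have e2 : expR (- s) = (q * q)^-1 by rewrite expRN e1.
have e3 : expR (- (s / 2)) = q^-1 by rewrite expRN.
rewrite e1 e2 e3.
have qn : q != 0 by rewrite gt_eqF.
have h1 : q * q + 1 != 0 by rewrite gt_eqF // addr_gt0 // mulr_gt0.
have h2 : q * q * 2 + (q * q * (q * q) + 1) != 0.
  by rewrite gt_eqF // addr_gt0 // ?mulr_gt0 // addr_gt0 // !mulr_gt0.
field.
by rewrite qn h1 h2.
Qed.


Lemma tl0 n : tl (0 : 'cV[R]_(1 + n)) = 0.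
Proof. by apply/matrixP => i j; rewrite !mxE. Qed.

Lemma sqrt_inv (beta : R) : 0 < beta -> Num.sqrt (beta^-1) = (Num.sqrt beta)^-1.
Proof.
move=> hb.
have -> : beta^-1 = ((Num.sqrt beta)^-1) ^+ 2 by rewrite exprVn sqr_sqrtr // ltW.
by rewrite sqrtr_sqr ger0_norm // invr_ge0 sqrtr_ge0.
Qed.

End Helpers.

Theorem theorem3p1 (R : realType) (beta : R) (m n : nat)
  (M : 'M[R]_(m, n)) (x : 'cV[R]_(1 + n)) :
  0 < beta -> (1 <= m)%N -> (1 <= n)%N ->
  @hyperboloid R n beta x ->
  let alpha := beta^-1 in
  p_HD beta (lorentz_mul beta M x) = mobius_mul alpha M (p_HD beta x).
Proof.
move=> hb _ _ [hx hx0] alpha.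
have b0 : 0 < Num.sqrt beta by rewrite sqrtr_gt0.
have bb : Num.sqrt beta ^+ 2 = beta by rewrite sqr_sqrtr // ltW.
move: hx hx0; rewrite (colE x) /lorentz_mul /p_HD lprod_col hd_col sqE !mxE eqxx mulr1n.
set x0 := @hd R n x; set u := @tl R n x.
move=> hx hx0.
clearbody x0 u.
rewrite tl_col.
have hsq := sq_ge0 u.
case: (eqVneq u 0) => [u0|un0].
  have sq0 : sq u = 0 by rewrite u0 /sq big1 // => i _; rewrite mxE expr0n.
  have x0E : x0 = Num.sqrt beta.
    have : x0 ^+ 2 = beta by rewrite expr2; lra.
    by move=> <-; rewrite sqrtr_sqr ger0_norm // ltW.
  have hE : col_mx x0%:M u = horigin n beta by rewrite /horigin x0E u0.
  rewrite hE /logo eqxx /Mhat tl0 mulmx0 col_mx0 /expo eqxx /horigin tl_col u0.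
  by rewrite !scaler0 /mobius_mul mulmx0 eqxx.
set b := Num.sqrt beta in b0 bb *.
have U0 := enorm_gt0 un0.
set U := enorm u in U0.
have sqU : sq u = U ^+ 2 by rewrite /U enormE sqr_sqrtr.
have hx2 : x0 ^+ 2 = b ^+ 2 + U ^+ 2 by rewrite bb -sqU expr2; lra.
have xbU : b < x0 + U by nra.
have xU : U < x0 by nra.
set d := ln ((x0 + U) / b).
have d0 : 0 < d by rewrite /d ln_gt0 // ltr_pdivlMr // mul1r.
have hne : col_mx x0%:M u != horigin n beta.
  by apply/eqP => /(congr1 (@tl R n)); rewrite /horigin !tl_col => h; rewrite h eqxx in un0.
have logoE : logo beta (col_mx x0%:M u) = col_mx 0 ((b * d / U) *: u).
  rewrite /logo (negbTE hne).
  have lp : lprod (horigin n beta) (col_mx x0%:M u) = - (b * x0).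
    rewrite /horigin lprod_col big1 ?addr0; last by move=> i _; rewrite mxE mul0r.
    by rewrite !mxE eqxx !mulr1n.
  rewrite lp.
  have wE : col_mx x0%:M u + (- (b * x0) / beta) *: horigin n beta = col_mx 0 u.
    rewrite /horigin scale_col_mx add_col_mx scaler0 addr0; congr col_mx.
    apply/matrixP => i j; rewrite !(ord1 i, ord1 j) !mxE eqxx !mulr1n -/b -bb.
    by field; rewrite gt_eqF.
  rewrite wE /lnorm lprod_col sqE !mxE mulr0 oppr0 add0r sqU sqrtr_sqr ger0_norm ?ltW //.
  rewrite /hdist -/b /arcosh.
rewrite lp opprK scale_col_mx scaler0; congr col_mx; congr (_ *: _).
  have -> : b * x0 / beta = x0 / b by rewrite -bb; field; rewrite gt_eqF.
  have -> : (x0 / b) ^+ 2 - 1 = (U / b) ^+ 2 by rewrite expr_div_n hx2; field; rewrite gt_eqF.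
  rewrite sqrtr_sqr ger0_norm ?divr_ge0 ?ltW // /d.
  by congr (_ * _ / _); congr ln; field; rewrite gt_eqF.
rewrite logoE /Mhat tl_col -scalemxAr /mobius_mul -scalemxAr.
set v := M *m u.
set k := b * d / U.
set c := b / (b + x0).
have k0 : 0 < k by rewrite /k divr_gt0 // mulr_gt0.
have c0 : 0 < c by rewrite /c divr_gt0 // addr_gt0.
case: (eqVneq v 0) => [v0|vn0].
  by rewrite v0 !scaler0 col_mx0 /expo eqxx /horigin tl_col !scaler0 eqxx.
have V0 := enorm_gt0 vn0.
set V := enorm v in V0.
have cvn : c *: v != 0 by rewrite scaler_eq0 negb_or vn0 andbT gt_eqF.
have kvn : col_mx (0 : 'cV[R]_1) (k *: v) != 0.
  by rewrite col_mx_eq0 negb_and eqxx /= scaler_eq0 negb_or vn0 andbT gt_eqF.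
rewrite (negbTE cvn) /expo (negbTE kvn).
have lnE : lnorm (col_mx (0 : 'cV[R]_1) (k *: v)) = k * V.
  rewrite /lnorm lprod_col sqE !mxE mulr0 oppr0 add0r -enormE enormZ ?ltW //.
rewrite lnE /horigin !scale_col_mx add_col_mx hd_col tl_col !scaler0 add0r addr0.
rewrite !enormZ ?ltW // -/U -/V sqrt_inv //.
rewrite [(_ *: _%:M) 0 0]mxE mxE eqxx mulr1n !scalerA; congr (_ *: v).
rewrite -/b.
have bn : b != 0 by rewrite gt_eqF.
have Un : U != 0 by rewrite gt_eqF.
have Vn : V != 0 by rewrite gt_eqF.
have cn : c != 0 by rewrite gt_eqF.
have kn : k != 0 by rewrite gt_eqF.
have dn : d != 0 by rewrite gt_eqF.
have bx : b + x0 != 0 by rewrite gt_eqF // addr_gt0.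
have ath : artanh (b^-1 * (c * U)) = d / 2.
  rewrite /artanh /d; congr (ln _ / _).
  set r := b^-1 * (c * U).
  have r1 : 1 - r != 0.
    have -> : 1 - r = (b + x0 - U) / (b + x0).
      rewrite /r /c; by field; rewrite ?bn ?bx ?Un ?Vn ?cn ?kn.
    by rewrite mulf_neq0 // ?invr_eq0 // gt_eqF // subr_gt0 ltr_wpDl // ltW.
  have e : 1 + r - (x0 + U) / b * (1 - r) = (b ^+ 2 - x0 ^+ 2 + U ^+ 2) / (b * (b + x0)).
    by rewrite /r /c; field; rewrite ?bn ?bx ?Un ?Vn ?cn ?kn.
  move: e; rewrite hx2 (_ : b ^+ 2 - (b ^+ 2 + U ^+ 2) + U ^+ 2 = 0) ?mul0r; last by ring.
  move => /eqP; rewrite subr_eq0 => /eqP ->.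
  by rewrite mulfK.
rewrite ath.
have -> : k * V / b = d * V / U by rewrite /k; field; rewrite ?bn ?bx ?Un ?Vn ?cn ?kn ?ch1 ?ch2 ?dn.
have -> : c * V / (c * U) * (d / 2) = d * V / U / 2 by field; rewrite ?bn ?bx ?Un ?Vn ?cn ?kn ?ch1 ?ch2 ?dn.
rewrite -tanh_half.
have ch : 0 < cosh (d * V / U).
  by rewrite /cosh divr_gt0 // addr_gt0 // expR_gt0.
have ch1 : 1 + cosh (d * V / U) != 0 by rewrite gt_eqF // addr_gt0.
have ch2 : b + cosh (d * V / U) * b != 0 by rewrite gt_eqF // addr_gt0 // mulr_gt0.
by rewrite /k; field; rewrite ?bn ?bx ?Un ?Vn ?cn ?kn ?ch1 ?ch2 ?dn.

Qed.
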